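(* Let $r,s,t,a,b,c$ be real numbers with $t\neq0$, and let $M_{H,n}^{(3)}$, $M_{h,n}^{(3)}$ be the matrix sequences defined in the context. Then for all nonnegative integers $m,n$: (i) $M_{h,n}^{(3)}M_{h,m}^{(3)}=M_{h,m}^{(3)}M_{h,n}^{(3)}=M_{h,n+m}^{(3)}$; (ii) $M_{H,n}^{(3)}M_{H,m}^{(3)}=M_{H,m}^{(3)}M_{H,n}^{(3)}$; (iii) $M_{H,1}^{(3)}M_{h,n}^{(3)}=M_{H,n}^{(3)}M_{h,1}^{(3)}=M_{H,n+1}^{(3)}$; (iv) $M_{H,n}^{(3)}M_{h,1}^{(3)}=M_{h,1}^{(3)}M_{H,n}^{(3)}=M_{H,n+1}^{(3)}$; (v) $M_{h,n}^{(3)}M_{H,n+1}^{(3)}=M_{H,2n+1}^{(3)}$.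
   Context: The third-order Horadam matrix sequence is the sequence of $3\times3$ matrices defined by $M_{H,n+3}^{(3)}=rM_{H,n+2}^{(3)}+sM_{H,n+1}^{(3)}+tM_{H,n}^{(3)}$ ($n\ge0$) with $M_{H,0}^{(3)}=\begin{pmatrix} b & c-rb & ta\\ a & b-ra & c-rb-sa\\ \frac{1}{t}(c-rb-sa) & a-\frac{r}{t}(c-rb-sa) & \frac1t\big(-sc+(t+rs)b+(s^2-rt)a\big)\end{pmatrix}$, $M_{H,1}^{(3)}=\begin{pmatrix} c & sb+ta & tb\\ b & c-rb & ta\\ a & b-ra & c-rb-sa\end{pmatrix}$, $M_{H,2}^{(3)}=\begin{pmatrix} rc+sb+ta & sc+tb & tc\\ c & sb+ta & tb\\ b & c-rb & ta\end{pmatrix}$. The generalized Tribonacci matrix sequence satisfies the same recurrence with $M_{h,0}^{(3)}=I_3$, $M_{h,1}^{(3)}=\begin{pmatrix} r&s&t\\1&0&0\\0&1&0\end{pmatrix}$, $M_{h,2}^{(3)}=\begin{pmatrix} r^2+s&rs+t&rt\\ r&s&t\\ 1&0&0\end{pmatrix}$. *)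

(* Defs.v *)
From HB Require Import structures.
From mathcomp Require Import all_boot all_order all_algebra.
From mathcomp Require Import reals.
Set Implicit Arguments. Unset Strict Implicit. Unset Printing Implicit Defensive.
Import Order.TTheory GRing.Theory Num.Theory.
Local Open Scope ring_scope.

(* Sequence of 3x3 matrices satisfying X_{n+3} = r X_{n+2} + s X_{n+1} + t X_n,
   with initial values X0, X1, X2. *)
Definition trib_mx {R : pzRingType} (r s t : R) (X0 X1 X2 : 'M[R]_3) (n : nat)
  : 'M[R]_3 :=
  (iter n (fun T : 'M[R]_3 * 'M[R]_3 * 'M[R]_3 =>
             let: (A, B, C) := T in (B, C, r *: C + s *: B + t *: A))
        (X0, X1, X2)).1.1.

Definition mx3 {R : pzRingType} (L : seq (seq R)) : 'M[R]_3 :=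
  \matrix_(i < 3, j < 3) nth 0 (nth [::] L i) j.

Section Mats.
Variable R : realType.
Variables r s t a b c : R.

Definition MH0 : 'M[R]_3 :=
  mx3
   [:: [:: b; c - r * b; t * a];
       [:: a; b - r * a; c - r * b - s * a];
       [:: t^-1 * (c - r * b - s * a); a - r / t * (c - r * b - s * a);
           t^-1 * (- s * c + (t + r * s) * b + (s ^+ 2 - r * t) * a)]].

Definition MH1 : 'M[R]_3 :=
  mx3
   [:: [:: c; s * b + t * a; t * b];
       [:: b; c - r * b; t * a];
       [:: a; b - r * a; c - r * b - s * a]].

Definition MH2 : 'M[R]_3 :=
  mx3
   [:: [:: r * c + s * b + t * a; s * c + t * b; t * c];
       [:: c; s * b + t * a; t * b];
       [:: b; c - r * b; t * a]].

Definition Mh1 : 'M[R]_3 :=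
  mx3
   [:: [:: r; s; t]; [:: 1; 0; 0]; [:: 0; 1; 0]].

Definition Mh2 : 'M[R]_3 :=
  mx3
   [:: [:: r ^+ 2 + s; r * s + t; r * t]; [:: r; s; t]; [:: 1; 0; 0]].

Definition MH (n : nat) : 'M[R]_3 := trib_mx r s t MH0 MH1 MH2 n.
Definition Mh (n : nat) : 'M[R]_3 := trib_mx r s t 1%:M Mh1 Mh2 n.
End Mats.

(* Main.v *)
Require Import Defs.
From HB Require Import structures.
From mathcomp Require Import all_boot all_order all_algebra.
From mathcomp Require Import reals.
From mathcomp Require Import ring zify.
Import GRing.Theory.
Local Open Scope ring_scope.

Ltac mxcomp := apply/matrixP; case=> [[|[|[|?]]] ?] //; case=> [[|[|[|?]]] ?] //;
  repeat rewrite ?mxE ?big_ord_recl ?big_ord0 /=.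

Lemma Mh1_cube (R : realType) (r s t : R) :
  Mh1 r s t ^+ 3 = r *: Mh1 r s t ^+ 2 + s *: Mh1 r s t + t *: 1.
Proof. rewrite !exprS expr0 !mulr1 -!mulmxE /Mh1 /mx3. mxcomp. all: ring. Qed.

Lemma Mh2E (R : realType) (r s t : R) : Mh2 r s t = Mh1 r s t ^+ 2.
Proof. rewrite !exprS expr0 !mulr1 -!mulmxE /Mh1 /Mh2 /mx3. mxcomp. all: ring. Qed.

Lemma MH1E (R : realType) (r s t a b c : R) : t != 0 ->
  MH1 r s t a b c = MH0 r s t a b c * Mh1 r s t.
Proof. move=> ht; rewrite -!mulmxE /Mh1 /MH0 /MH1 /mx3. mxcomp. all: field; done. Qed.

Lemma MH2E (R : realType) (r s t a b c : R) : 
  MH2 r s t a b c = MH1 r s t a b c * Mh1 r s t.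
Proof. rewrite -!mulmxE /Mh1 /MH2 /MH1 /mx3. mxcomp. all: ring. Qed.

Lemma MH0comm (R : realType) (r s t a b c : R) : t != 0 ->
  Mh1 r s t * MH0 r s t a b c = MH0 r s t a b c * Mh1 r s t.
Proof. move=> ht; rewrite -!mulmxE /Mh1 /MH0 /mx3. mxcomp. all: field; done. Qed.

Lemma step_aux (R : realType) (r s t : R) (X0 A P A2 A3 : 'M[R]_3) :
  A3 = r *: A2 + s *: A + t *: 1 ->
  r *: (X0 * (P * A2)) + s *: (X0 * (P * A)) + t *: (X0 * P) = X0 * (P * A3).
Proof.
move=> ->; by rewrite !mulrDr -!scalerAr mulr1.
Qed.

Lemma trib_iter (R : realType) (r s t : R) (X0 A : 'M[R]_3) n :
  A ^+ 3 = r *: A ^+ 2 + s *: A + t *: 1 ->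
  iter n (fun T : 'M[R]_3 * 'M[R]_3 * 'M[R]_3 =>
             let: (A, B, C) := T in (B, C, r *: C + s *: B + t *: A))
        (X0, X0 * A, X0 * A ^+ 2) = (X0 * A ^+ n, X0 * A ^+ n.+1, X0 * A ^+ n.+2).
Proof.
move=> H3; elim: n => [|n IH]; first by rewrite expr0 mulr1 expr1.
rewrite iterS IH.
have E : r *: (X0 * A ^+ n.+2) + s *: (X0 * A ^+ n.+1) + t *: (X0 * A ^+ n)
   = X0 * A ^+ n.+3.
  have e3 : A ^+ n.+3 = A ^+ n * A ^+ 3 by rewrite -exprD addn3.
  have e2 : A ^+ n.+2 = A ^+ n * A ^+ 2 by rewrite -exprD addn2.
  have e1 : A ^+ n.+1 = A ^+ n * A by rewrite exprSr.
  rewrite e3 e2 e1; exact: step_aux.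
by rewrite E.
Qed.

Lemma MhE (R : realType) (r s t : R) n : Mh r s t n = Mh1 r s t ^+ n.
Proof.
rewrite /Mh /trib_mx Mh2E.
change (1%:M : 'M[R]_3) with (1 : 'M[R]_3).
have := @trib_iter R r s t 1 (Mh1 r s t) n (Mh1_cube R r s t); rewrite !mul1r => ->. by [].
Qed.

Lemma MHE (R : realType) (r s t a b c : R) n : t != 0 ->
  MH r s t a b c n = MH0 r s t a b c * Mh1 r s t ^+ n.
Proof.
move=> ht; rewrite /MH /trib_mx MH2E MH1E // -mulrA -expr2.
by rewrite (@trib_iter R r s t (MH0 r s t a b c) (Mh1 r s t) n (Mh1_cube R r s t)).
Qed.

Theorem lemma3p1 (R : realType) (r s t a b c : R) (ht : t != 0) (m n : nat) :
  [/\ Mh r s t n *m Mh r s t m = Mh r s t (n + m)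
      /\ Mh r s t m *m Mh r s t n = Mh r s t (n + m),
    MH r s t a b c n *m MH r s t a b c m = MH r s t a b c m *m MH r s t a b c n,
    MH r s t a b c 1 *m Mh r s t n = MH r s t a b c (n + 1)
      /\ MH r s t a b c n *m Mh r s t 1 = MH r s t a b c (n + 1),
    MH r s t a b c n *m Mh r s t 1 = MH r s t a b c (n + 1)
      /\ Mh r s t 1 *m MH r s t a b c n = MH r s t a b c (n + 1)
    & Mh r s t n *m MH r s t a b c n.+1 = MH r s t a b c (2 * n + 1)].
Proof.
rewrite !mulmxE !MhE !MHE //.
set A := Mh1 r s t; set X := MH0 r s t a b c.
have cX : forall k, GRing.comm (A ^+ k) X.
  move=> k; apply/commr_sym/commrX; exact/esym/MH0comm.
have cXr : forall k, A ^+ k * X = X * A ^+ k by move=> k; apply: cX.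
split.
- by split; rewrite -!exprD // addnC.
- rewrite -!mulrA (mulrA (A ^+ n)) (mulrA (A ^+ m)) !cXr -!mulrA -!exprD.
  by rewrite addnC.
- by split; rewrite -!mulrA -!exprD // addnC.
- by split; rewrite ?mulrA ?cXr -!mulrA -!exprD // addnC.
- by rewrite mulrA cXr -!mulrA -!exprD; congr (_ * (A ^+ _)); lia.
Qed.
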